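(* Let $X$ and $Y$ be finite sets with $|Y| = n$, let $I = X \cap Y$, and let $p \in [1/2, 1]$. Define two random variables as follows. (1) (Mechanism $\mathcal M'_Y$.) Sample $s \sim \mathrm{Bin}(n, 2(1-p))$; choose $T$ uniformly at random among all subsets of $Y$ of cardinality $s$; independently for each $y \in I \cap T$ flip a fair coin $c_y \sim \mathrm{Ber}(1/2)$; set $Z' = |I \setminus T| + \sum_{y \in I \cap T} c_y$. (2) (Mechanism $\mathcal M''_Y$.) Sample $s_1 \sim \mathrm{Bin}(|I|, 2(1-p))$; choose $T_1$ uniformly at random among all subsets of $I$ of cardinality $s_1$; independently for each $y \in T_1$ flip a fair coin $c_y \sim \mathrm{Ber}(1/2)$; set $Z'' = |I \setminus T_1| + \sum_{y \in T_1} c_y$. Then $\Pr[Z' = z] = \Pr[Z'' = z]$ for all integers $z \ge 0$.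
   Context: $\mathrm{Ber}(r)$ denotes a Bernoulli random variable with success probability $r$, and $\mathrm{Bin}(m, r)$ a binomial random variable with $m$ trials and success probability $r$. All random choices are independent unless stated otherwise. *)

(* Defs.v *)
From mathcomp Require Import all_boot all_order all_algebra.
Set Implicit Arguments. Unset Strict Implicit. Unset Printing Implicit Defensive.
Import Order.TTheory GRing.Theory Num.Theory.
Local Open Scope ring_scope.

Definition binom_pmf {R : realFieldType} (m : nat) (r : R) (s : nat) : R :=
  'C(m, s)%:R * r ^+ s * (1 - r) ^+ (m - s).

Definition ksubsets {T : finType} (A : {set T}) (s : nat) : {set {set T}} :=
  [set S : {set T} | (S \subset A) && (#|S| == s)].

(* Generic mechanism on ground set G with intersection set I and flip
   probability r:  s ~ Bin(|G|, r); S uniform among s-subsets of G;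
   independent fair coins c_y for y in I :&: S (encoded by the set
   C \subset I :&: S of heads, each outcome having probability
   (1/2)^|I :&: S|); output |I \ S| + sum_y c_y = |I \ S| + |C|. *)
Definition mech_pr {R : realFieldType} {T : finType} (G I : {set T}) (r : R)
    (z : nat) : R :=
  \sum_(0 <= s < #|G|.+1)
    binom_pmf #|G| r s *
    \sum_(S in ksubsets G s)
      (#|ksubsets G s|%:R)^-1 *
      \sum_(C : {set T} | C \subset I :&: S)
        (2%:R ^+ #|I :&: S|)^-1 * (#|I :\: S| + #|C| == z)%:R.

Definition M'_pr {R : realFieldType} {T : finType} (X Y : {set T}) (p : R)
    (z : nat) : R := mech_pr Y (X :&: Y) (2%:R * (1 - p)) z.

Definition M''_pr {R : realFieldType} {T : finType} (X Y : {set T}) (p : R)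
    (z : nat) : R := mech_pr (X :&: Y) (X :&: Y) (2%:R * (1 - p)) z.

(* Main.v *)
Require Import Defs.
From mathcomp Require Import all_boot all_order all_algebra.
From mathcomp Require Import ring lra zify.
Import Order.TTheory GRing.Theory Num.Theory.
Local Open Scope ring_scope.

Ltac solve_b := by [ move=> /(_ isT) | move=> _ /(_ isT) | move=> _ _ /(_ isT)
  | move=> /(_ isT) _ | move=> /(_ isT) _ _ | move=> _ /(_ isT) _ ].

Section Aux.
Variables (R : realFieldType) (T : finType) (r : R).

Definition wt (D S : {set T}) : R := r ^+ #|S| * (1 - r) ^+ (#|D| - #|S|).

Lemma L1 (D : {set T}) (g : {set T} -> R) :
  \sum_(0 <= s < #|D|.+1) binom_pmf #|D| r s *
    \sum_(S in ksubsets D s) (#|ksubsets D s|%:R)^-1 * g S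
  = \sum_(S : {set T} | S \subset D) wt D S * g S.
Proof.
rewrite (partition_big (fun S : {set T} => (inord #|S| : 'I_(#|D|.+1))) predT) //=.
rewrite big_mkord; apply: eq_bigr => j _.
rewrite mulr_sumr; apply: eq_big => [S|S].
  rewrite /ksubsets inE; case sSD: (S \subset D) => //=.
  have le : (#|S| < #|D|.+1)%N by rewrite ltnS subset_leq_card.
  by rewrite -val_eqE /= inordK.
rewrite /ksubsets inE => /andP [sSD /eqP <-].
rewrite cards_draws /binom_pmf /wt.
have Cn : ('C(#|D|, #|S|)%:R : R) != 0.
  by rewrite pnatr_eq0 -lt0n bin_gt0 subset_leq_card.
by field.
Qed.


Lemma L2 (D : {set T}) : \sum_(S : {set T} | S \subset D) wt D S = 1.
Proof.
have := L1 D (fun _ => 1).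
under [RHS]eq_bigr do rewrite mulr1.
move=> <-.
have E : ((1 - r) + r) ^+ #|D| = 1 by rewrite subrK expr1n.
rewrite -[X in _ = X]E exprDn big_mkord; apply: eq_bigr => j _.
under eq_bigr do rewrite mulr1.
rewrite sumr_const /ksubsets cards_draws.
have Cn : ('C(#|D|, j)%:R : R) != 0 by rewrite pnatr_eq0 -lt0n bin_gt0 -ltnS.
have H : ('C(#|D|, j)%:R : R)^-1 *+ 'C(#|D|, j) = 1 by rewrite -[(_^-1) *+ _]mulr_natr mulVf.
by rewrite H mulr1 /binom_pmf -[RHS]mulr_natr; ring.
Qed.


Lemma L3 (I G : {set T}) (sIG : I \subset G) (h : {set T} -> R) :
  \sum_(S : {set T} | S \subset G) wt G S * h (I :&: S)
  = \sum_(A : {set T} | A \subset I) wt I A * h A.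
Proof.
rewrite (partition_big (fun S => I :&: S) (fun A => A \subset I)) /=;
  last by move=> S _; apply: subsetIl.
apply: eq_bigr => A sAI.
rewrite (reindex_onto (fun B => A :|: B) (fun S => S :\: I)) /=; last first.
  move=> S /andP [_ /eqP <-]; apply/setP => x; rewrite !inE.
  by case: (x \in I); case: (x \in S).
transitivity (\sum_(B : {set T} | B \subset G :\: I) wt I A * h A * wt (G :\: I) B);
  last by rewrite -mulr_sumr L2 mulr1.
apply: eq_big => [B|B].
  apply/idP/idP.
    move=> /andP [/andP [H1 _] /eqP H3]; rewrite -H3.
    apply/subsetP => x; rewrite !inE => /andP [nI AB].
    by rewrite nI (subsetP H1) // inE.
  move=> sB; apply/andP; split; first (apply/andP; split).
  - apply/subsetP => x; move: (subsetP sAI x) (subsetP sIG x) (subsetP sB x).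
    rewrite !inE; case: (x \in A); case: (x \in B); case: (x \in I);
      case: (x \in G) => //=; solve_b.
  - apply/eqP/setP => x; move: (subsetP sAI x) (subsetP sIG x) (subsetP sB x).
    rewrite !inE; case: (x \in A); case: (x \in B); case: (x \in I);
      case: (x \in G) => //=; solve_b.
  - apply/eqP/setP => x; move: (subsetP sAI x) (subsetP sIG x) (subsetP sB x).
    rewrite !inE; case: (x \in A); case: (x \in B); case: (x \in I);
      case: (x \in G) => //=; solve_b.
move=> /andP [/andP [H1 /eqP eIAB] /eqP H3].
have sB : B \subset G :\: I.
  rewrite -H3; apply/subsetP => x; rewrite !inE => /andP [nI AB].
  by rewrite nI (subsetP H1) // inE.
have dAB : A :&: B = set0.
  apply/setP => x; move: (subsetP sAI x) (subsetP sB x).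
  rewrite !inE; case: (x \in A); case: (x \in B); case: (x \in I) => //=; solve_b.
rewrite eIAB /wt cardsU dAB cards0 subn0.
have cG : #|G| = (#|I| + #|G :\: I|)%N by rewrite cardsDS // subnKC // subset_leq_card.
have cA := subset_leq_card sAI.
have cB := subset_leq_card sB.
have -> : (#|G| - (#|A| + #|B|) = (#|I| - #|A|) + (#|G :\: I| - #|B|))%N by lia.
rewrite !exprD; ring.
Qed.

End Aux.

Definition hh (R : realFieldType) (T : finType) (I A : {set T}) (z : nat) : R :=
  \sum_(C : {set T} | C \subset A)
    (2%:R ^+ #|A|)^-1 * (#|I :\: A| + #|C| == z)%:R.

Lemma mech_eq (R : realFieldType) (T : finType) (G I : {set T}) (r : R) z :
  I \subset G ->
  mech_pr G I r z = \sum_(A : {set T} | A \subset I) @wt R T r I A * @hh R T I A z.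
Proof.
move=> sIG; rewrite /mech_pr.
transitivity (\sum_(S : {set T} | S \subset G) @wt R T r G S * @hh R T I (I :&: S) z);
  last exact: L3.
rewrite -L1; apply: eq_bigr => s _; congr (_ * _); apply: eq_bigr => S _.
congr (_ * _); rewrite /hh.
have -> : I :\: (I :&: S) = I :\: S.
  by apply/setP => x; rewrite !inE; case: (x \in I); case: (x \in S).
by [].
Qed.

Theorem lemma3 (R : realFieldType) (T : finType) (X Y : {set T}) (p : R)
    (hp1 : 2%:R^-1 <= p) (hp2 : p <= 1) (z : nat) :
  M'_pr X Y p z = M''_pr X Y p z.
Proof.
rewrite /M'_pr /M''_pr !mech_eq //; exact: subsetIr.
Qed.
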